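(* Let $P,Q$ be probability distributions on the same finite sample space with $S(P\|Q)\le c$. Then for all $r>1$ there exist probability distributions $P',P''$ on that sample space such that $\|P-P'\|_1\le \frac{2}{r}$ and $Q=\alpha P'+(1-\alpha)P''$, where $\alpha:=\frac{r-1}{r\,2^{r(c+1)}}$.
   Context: $S(P\|Q):=\sum_i P(i)\log_2\frac{P(i)}{Q(i)}$ is the relative entropy, and $\|P-P'\|_1:=\sum_i|P(i)-P'(i)|$ is the total variation distance. *)

(* Defs.v *)
From mathcomp Require Import all_boot all_order all_algebra.
From mathcomp Require Import all_classical all_reals all_analysis.
Set Implicit Arguments. Unset Strict Implicit. Unset Printing Implicit Defensive.
Import Order.TTheory GRing.Theory Num.Theory.
Local Open Scope ring_scope.

Definition is_distr (R : realType) (T : finType) (P : {ffun T -> R}) : Prop :=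
  (forall i, 0 <= P i) /\ \sum_(i : T) P i = 1.

Definition log2 (R : realType) (x : R) : R := ln x / ln 2.

(* Relative entropy S(P||Q) = sum_i P(i) log2 (P(i)/Q(i)), in the extended
   reals, with the standard conventions 0 log(0/q) = 0 and
   p log(p/0) = +oo for p > 0. *)
Definition rel_entropy (R : realType) (T : finType) (P Q : {ffun T -> R})
  : \bar R :=
  if [forall i, (Q i == 0) ==> (P i == 0)] then
    ((\sum_(i : T | P i != 0) P i * log2 (P i / Q i))%:E)%E
  else (+oo)%E.

Definition l1_dist (R : realType) (T : finType) (P P' : {ffun T -> R}) : R :=
  \sum_(i : T) `|P i - P' i|.

(* Main.v *)
Require Import Defs.
From mathcomp Require Import all_boot all_order all_algebra.
From mathcomp Require Import all_classical all_reals all_analysis.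
From mathcomp Require Import lra ring.
Import Order.TTheory GRing.Theory Num.Theory.
Local Open Scope ring_scope.
Section H.
Variable R : realType.

Lemma ln_ge1 (x : R) : 0 < x -> 1 - x^-1 <= ln x.
Proof.
move=> x0.
have h := @le_ln1Dx R (x^-1 - 1).
have xi : 0 < x^-1 by rewrite invr_gt0.
have : -1 < x^-1 - 1 by lra.
move/h; rewrite addrC subrK lnV ?posrE //. lra.
Qed.

Lemma ln2_ge : 1/2 <= ln (2:R).
Proof. have := @ln_ge1 2 (ltr0Sn _ 1). rewrite (_ : (2:R)^-1 = 1/2) ?div1r //. lra. Qed.

Lemma ln2_le : ln (2:R) <= 1.
Proof. have := @le_ln1Dx R 1. rewrite (_ : 1 + 1 = (2:R)) //. apply. lra. Qed.

Lemma key (p q : R) : 0 < p -> 0 < q -> 0 <= p * ln (p / q) + q * ln 2.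
Proof.
move=> p0 q0.
have pq : 0 < p / q by rewrite divr_gt0.
have := @ln_ge1 (2 * (p / q)) (mulr_gt0 (ltr0Sn _ 1) pq).
rewrite lnM ?posrE // => h.
have e : p * (2 * (p / q))^-1 = q / 2.
  by field; rewrite !gt_eqF.
have h2 := ln2_ge. have h3 := ln2_le.
have h4 : p * (1 - (2 * (p / q))^-1) <= p * (ln 2 + ln (p / q)).
  by rewrite ler_pM2l.
rewrite mulrBr mulr1 e in h4.
set a := ln (p/q) in h4 *. set l := ln (2:R) in h2 h3 h4 *.
nra.
Qed.

Lemma gibbs (p q : R) : 0 < p -> 0 < q -> p - q <= p * ln (p / q).
Proof.
move=> p0 q0.
have := @ln_ge1 (p / q) (divr_gt0 p0 q0).
move=> h.
have := h; rewrite -(ler_pM2l p0) mulrBr mulr1 invf_div.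
rewrite (_ : p * (q / p) = q) //. field. by rewrite gt_eqF.
Qed.
End H.

Theorem mainTheorem3 (R : realType) (T : finType) (P Q : {ffun T -> R}) (c : R) :
  is_distr P -> is_distr Q -> (rel_entropy P Q <= c%:E)%E ->
  forall r : R, 1 < r ->
  exists P' P'' : {ffun T -> R},
    [/\ is_distr P', is_distr P'',
        l1_dist P P' <= 2 / r &
        let alpha := (r - 1) / (r * (2 `^ (r * (c + 1)))) in
        forall i, Q i = alpha * P' i + (1 - alpha) * P'' i].
Proof.
move=> [P0 P1] [Q0 Q1] hent r r1.
have [hsupp hS] : (forall i, Q i = 0 -> P i = 0) /\
   \sum_(i | P i != 0) P i * log2 (P i / Q i) <= c.
  move: hent; rewrite /rel_entropy; case: ifP => [/forallP H | _].
    rewrite lee_fin => hc; split => // i Qi; apply/eqP.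
    by move/implyP: (H i); apply; rewrite Qi.
  by rewrite leye_eq.
have l2 : 0 < ln (2:R) by have := ln2_ge R; lra.
have SP : \sum_(i | P i != 0) P i = 1.
  rewrite -P1 big_mkcond; apply: eq_bigr => i _.
  by case: eqP => // ->.
have SQ : \sum_(i | P i != 0) Q i <= 1.
  rewrite -Q1 [leRHS](bigID (fun i => P i != 0)) /= lerDl.
  by apply: sumr_ge0 => i _.
have pos : forall i, P i != 0 -> 0 < P i /\ 0 < Q i.
  move=> i Pi; split; first by rewrite lt0r Pi P0.
  rewrite lt0r Q0 andbT; apply/eqP => /hsupp /eqP; by rewrite (negbTE Pi).
have hc : 0 <= c.
  apply: le_trans hS.
  have : \sum_(i | P i != 0) (P i - Q i) / ln 2 <= \sum_(i | P i != 0) P i * log2 (P i / Q i).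
    apply: ler_sum => i /pos [p0 q0].
    rewrite /log2 mulrA ler_pM2r ?invr_gt0 //; exact: (@gibbs R).
  apply: le_trans.
  rewrite -mulr_suml sumrB SP; apply: divr_ge0; [by rewrite subr_ge0 | exact: ltW].
set t := r * (c + 1).
set K := 2 `^ t.
have K1 : 1 <= K.
  rewrite /K /powR /= pnatr_eq0 /=.
  have := expR_ge1Dx (t * ln 2).
  have tpos : 0 <= t by apply: mulr_ge0; lra.
  have : 0 <= t * ln 2 by rewrite mulr_ge0 // ltW.
  lra.
set B := fun i => K * Q i < P i.
set b := \sum_(i | B i) P i.
have tb : t * b <= c + 1.
  rewrite /b mulr_sumr.
  apply: (@le_trans _ _ (\sum_(i | P i != 0) (P i * log2 (P i / Q i) + Q i))); last first.
    by rewrite big_split /=; apply: lerD.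
  rewrite big_mkcond [leRHS]big_mkcond /=; apply: ler_sum => i _.
  case: ifP => Bi.
    have Pi : P i != 0.
      by rewrite gt_eqF //; apply: le_lt_trans Bi; rewrite mulr_ge0 //; lra.
    rewrite Pi; have [p0 q0] := pos i Pi.
    have : t * ln 2 < ln (P i / Q i).
      rewrite -ln_powR -/K ltr_ln ?posrE ?divr_gt0 //; last by lra.
      by rewrite ltr_pdivlMr.
    rewrite -ltr_pdivlMr // -/(log2 _) => hl.
    have : P i * t <= P i * log2 (P i / Q i) by rewrite ler_pM2l //; exact: ltW.
    lra.
  case: ifP => // Pi; have [p0 q0] := pos i Pi.
  have := @key R _ _ p0 q0.
  have -> : P i * ln (P i / Q i) + Q i * ln 2 = (P i * log2 (P i / Q i) + Q i) * ln 2.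
    by rewrite /log2; field; rewrite gt_eqF.
  by rewrite pmulr_lge0.
have c1 : 0 < c + 1 by lra.
have rb : r * b <= 1.
  have : (c+1)*(r*b) <= (c+1)*1 by rewrite mulr1 mulrA (mulrC (c+1)); exact: tb.
  by rewrite ler_pM2l.
have b0 : 0 <= b by apply: sumr_ge0.
set g := \sum_(i | ~~ B i) P i.
have gb : g = 1 - b.
  by rewrite -P1 (bigID B) /= addrC addrK.
have g0 : 0 < g by rewrite gb; nra.
have g1 : g <= 1 by lra.
have rg : r - 1 <= r * g by rewrite gb; lra.
pose P' := [ffun i => if B i then 0 else P i / g].
set alpha := (r - 1) / (r * K).
have ha : alpha * (r * K) = r - 1.
  by rewrite /alpha divfK // gt_eqF // mulr_gt0 //; lra.
have a0 : 0 < alpha by rewrite /alpha divr_gt0 ?mulr_gt0 //; lra.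
have a1 : alpha < 1.
  rewrite /alpha ltr_pdivrMr ?mulr_gt0 //; try lra. nra.
have P'0 : forall i, 0 <= P' i.
  by move=> i; rewrite /P' ffunE; case: ifP => // _; rewrite divr_ge0 // ltW.
pose P'' := [ffun i => (Q i - alpha * P' i) / (1 - alpha)].
exists P', P''; split.
- split => //.
  rewrite (bigID B) /= big1 ?add0r; last by move=> i Bi; rewrite ffunE Bi.
  rewrite (eq_bigr (fun i => P i / g)); last by move=> i /negbTE Bi; rewrite ffunE Bi.
  by rewrite -mulr_suml divff // gt_eqF.
- split.
    move=> i; rewrite ffunE; apply: divr_ge0; last by lra.
    rewrite subr_ge0.
    rewrite /P' ffunE; case: ifP => Bi; first by rewrite mulr0.
    move/negbT: Bi; rewrite -leNgt => hP.
    rewrite mulrA ler_pdivrMr //.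
    have : r * (alpha * P i) <= r * (Q i * g).
      have h1 : alpha * P i <= alpha * (K * Q i) by rewrite ler_pM2l.
      have h2 : r * (alpha * (K * Q i)) = (r - 1) * Q i.
        by rewrite -ha; ring.
      have h3 : (r - 1) * Q i <= r * g * Q i by rewrite ler_wpM2r.
      have h4 : r * (alpha * P i) <= r * (alpha * (K * Q i)) by rewrite ler_pM2l //; lra.
      lra.
    by rewrite ler_pM2l //; lra.
  rewrite (eq_bigr (fun i => (Q i - alpha * P' i) * (1 - alpha)^-1)); last by move=> i _; rewrite ffunE.
  rewrite -mulr_suml sumrB Q1 -mulr_sumr.
  have -> : \sum_i P' i = 1.
    rewrite (bigID B) /= big1 ?add0r; last by move=> i Bi; rewrite ffunE Bi.
    rewrite (eq_bigr (fun i => P i / g)); last by move=> i /negbTE Bi; rewrite ffunE Bi.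
    by rewrite -mulr_suml divff // gt_eqF.
  by rewrite mulr1 divff // subr_eq0 gt_eqF.
- rewrite /l1_dist (bigID B) /=.
  rewrite (eq_bigr (fun i => P i)); last by move=> i Bi; rewrite ffunE Bi subr0 ger0_norm.
  rewrite [X in _ + X](eq_bigr (fun i => P i * (g^-1 - 1))); last first.
    move=> i /negbTE Bi; rewrite ffunE Bi ler0_norm; last first.
      rewrite subr_le0 ler_pdivlMr //; have := P0 i; nra.
    by rewrite opprB mulrBr mulr1.
  rewrite -mulr_suml -/b -/g mulrBr mulr1 divff ?gt_eqF //.
  have h : b <= r^-1 by rewrite -[r^-1]mulr1 ler_pdivlMl //; lra.
  rewrite gb; lra.
- move=> al i; rewrite /al.
  have -> : P'' i = (Q i - alpha * P' i) / (1 - alpha) by rewrite /P'' ffunE.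
  field; rewrite subr_eq0 gt_eqF //.
Qed.
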